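(* Consider the pay-to-bid game without re-entry with $n\ge 2$ players and fixed $\rho\le 0$, played according to its unique symmetric subgame perfect equilibrium. As $\frac{v-s}{c}\to\infty$ (equivalently, as $\lambda:=\frac{u(c)}{u(v-s)}\to 0^+$): (I) the expected number of rounds of the game tends to infinity; (II) if $n>2$, the probability that the number of active players is reduced to exactly two at some round before the game ends tends to $1$, i.e. $\Pr\{T_{n,2}<T_{n,1}\}\to 1$; (III) if $n>2$, $\frac{\mathbb{E}[T_{n,2}]}{\mathbb{E}[T_{n,1}]}\to 0$, i.e. the expected time until $n-2$ players have exited is negligible relative to the expected length of the auction.
   Context: Pay-to-bid game: an object has monetary value $v>0$ that is common knowledge; there are $n\ge 2$ players; the bid fee is $c>0$ and the fixed sale price is $s\ge 0$, with $c<v-s$. Play proceeds in rounds with complete information. In each round every active player simultaneously chooses an action in $\{\text{Bid},\text{No Bid}\}$. Each Bid costs $c$, paid immediately to the seller. If exactly one active player bids, she wins the object (value $v$), pays $s$, and the game ends; if two or more bid, play continues; if none bids, the round is replayed (a replay is not counted as a new round). Without re-entry, the active players in the next round are exactly those who bid in the current round. Players do not discount; payoff is $u$(final wealth) with $u(x)=\frac{1-e^{-\rho x}}{\rho}$ for a constant $\rho<0$, or $u(x)=x$ when $\rho=0$. In the unique symmetric subgame perfect equilibrium, when $m$ players are active each plays Bid with probability $1-\lambda^{1/(m-1)}$, where $\lambda=u(c)/u(v-s)$. For $1\le m<n$, $T_{n,m}$ denotes the number of rounds, in the game starting with $n$ active players, until the number of active players is at most $m$; in particular $T_{n,1}$ is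 the round in which the game ends, and $T_{n,2}<T_{n,1}$ means that at some round before the end exactly two players are active. *)

(* Defs.v *)
From Stdlib Require Import Reals Lra Lia.
Open Scope R_scope.

Definition util (rho x : R) : R :=
  if Req_EM_T rho 0 then x else (1 - exp (- rho * x)) / rho.

Definition lambda (rho c v s : R) : R := util rho c / util rho (v - s).

(* Equilibrium bid probability with m active players: 1 - lambda^{1/(m-1)}. *)
Definition bidprob (lam : R) (m : nat) : R :=
  1 - Rpower lam (/ INR (m - 1)).

(* One-round transition probability from m active players to k active players
   (k = number of bidders), with replays (nobody bids) removed by conditioning
   on at least one bid.  State 1 means the game has ended (absorbing). *)
Definition trans (lam : R) (m k : nat) : R :=
  match m with
  | O => 0
  | S O => if Nat.eqb k 1 then 1 else 0
  | _ =>
    if andb (Nat.leb 1 k) (Nat.leb k m) then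
      let p := bidprob lam m in
      C m k * p ^ k * (1 - p) ^ (m - k) / (1 - (1 - p) ^ m)
    else 0
  end.

(* dist lam n t j = Pr(number of active players after t rounds is j),
   starting with n active players (t = 0). Once the game ended (state 1),
   the state stays 1. *)
Fixpoint dist (lam : R) (n t j : nat) : R :=
  match t with
  | O => if Nat.eqb j n then 1 else 0
  | S t' => sum_f_R0 (fun i => dist lam n t' i * trans lam i j) n
  end.

(* Pr(T_{n,m} > t) = Pr(more than m players active after t rounds)
   (the number of active players is non-increasing). *)
Definition surv (lam : R) (n m t : nat) : R :=
  sum_f_R0 (fun j => if Nat.ltb m j then dist lam n t j else 0) n.

(* Pr(T_{n,2} = t+1 and exactly two players are active after round t+1),
   i.e. more than two players active after round t and exactly two after
   round t+1.  Summing over t gives Pr(T_{n,2} < T_{n,1}). *)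
Definition enter2 (lam : R) (n t : nat) : R :=
  sum_f_R0 (fun j => if Nat.ltb 2 j then dist lam n t j * trans lam j 2 else 0) n.

(* Main.v *)
Require Import Defs.
From Stdlib Require Import Reals Lra Lia.
Open Scope R_scope.

Lemma conv_bounded (f : nat -> R) (B : R) :
  (forall t, 0 <= f t) -> (forall N, sum_f_R0 f N <= B) ->
  exists l, infinite_sum f l /\ l <= B /\ (forall N, sum_f_R0 f N <= l).
Proof.
  intros Hf HB.
  assert (Hg : Un_growing (sum_f_R0 f)).
  { intro k. simpl. specialize (Hf (S k)). lra. }
  assert (Hu : has_ub (sum_f_R0 f)).
  { exists B. intros x [i ->]. apply HB. }
  destruct (growing_cv _ Hg Hu) as [l Hl].
  exists l. split; [exact Hl|]. split.
  - destruct (Rle_or_lt l B) as [H|H]; [exact H|].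
    destruct (Hl (l - B)) as [N HN]; [lra|].
    specialize (HN N (le_n N)). specialize (HB N). unfold Rdist in HN.
    apply Rabs_def2 in HN. lra.
  - intro N. apply (growing_ineq _ _ Hg Hl).
Qed.

Lemma sum_const_le (G : nat -> R) (N : nat) :
  (forall t, (t <= N)%nat -> G N <= G t) ->
  INR (S N) * G N <= sum_f_R0 G N.
Proof.
  intro H.
  assert (forall k, (k <= N)%nat -> INR (S k) * G N <= sum_f_R0 G k).
  { induction k; intros Hk.
    - simpl. specialize (H 0%nat Hk). lra.
    - rewrite S_INR. rewrite tech5. specialize (IHk ltac:(lia)). specialize (H (S k) Hk).
      lra. }
  apply H0. lia.
Qed.

Section Abs.
Variables (G H e1 e2 : nat -> R) (beta gamma q G0 H0 : R).
Hypotheses (Hbeta : 0 < beta) (Hgamma : 0 <= gamma) (Hq0 : 0 <= q) (Hq1 : q < 1)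
  (HG : forall t, 0 <= G t) (HH : forall t, 0 <= H t) (He1 : forall t, 0 <= e1 t)
  (HG0 : G 0%nat = G0) (HH0 : H 0%nat = H0)
  (HGS : forall t, G (S t) = G t - e2 t - e1 t)
  (HHS : forall t, H (S t) = q * H t + e2 t)
  (He2b : forall t, beta * G t <= e2 t)
  (He1b : forall t, e1 t <= gamma * G t).

Lemma He2 t : 0 <= e2 t.
Proof. pose proof (He2b t). pose proof (HG t). nra. Qed.

Lemma telesc N : sum_f_R0 (fun t => e2 t + e1 t) N = G0 - G (S N).
Proof.
  induction N; simpl.
  - rewrite HGS, HG0. ring.
  - rewrite IHN. rewrite (HGS (S N)). ring.
Qed.

Lemma sumG_bound N : sum_f_R0 G N <= G0 / beta.
Proof.
  assert (beta * sum_f_R0 G N <= G0).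
  { rewrite scal_sum.
    apply Rle_trans with (sum_f_R0 (fun t => e2 t + e1 t) N).
    - apply sum_Rle. intros. pose proof (He2b n). pose proof (He1 n). nra.
    - rewrite telesc. pose proof (HG (S N)). lra. }
  apply Rmult_le_reg_l with beta; [lra|]. field_simplify; lra.
Qed.

Lemma G_decr t s : (s <= t)%nat -> G t <= G s.
Proof.
  induction 1. lra. rewrite HGS. pose proof (He2 m). pose proof (He1 m). lra.
Qed.

Lemma abstract_main :
  exists E2 P L,
    infinite_sum G E2 /\ 0 <= E2 /\ E2 <= G0 / beta /\
    infinite_sum e2 P /\ P <= G0 /\ G0 - gamma * (G0 / beta) <= P /\
    infinite_sum H L /\ H0 + P <= (1 - q) * L.
Proof.
  destruct (conv_bounded G (G0/beta) HG sumG_bound) as [E2 [HE2 [HE2b HE2p]]].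
  assert (He2sum : forall N, sum_f_R0 e2 N <= G0).
  { intro N. apply Rle_trans with (sum_f_R0 (fun t => e2 t + e1 t) N).
    - apply sum_Rle. intros. pose proof (He1 n). lra.
    - rewrite telesc. pose proof (HG (S N)). lra. }
  destruct (conv_bounded e2 G0 He2 He2sum) as [P [HP [HPb HPp]]].
  assert (HPlow : G0 - gamma * (G0 / beta) <= P).
  { destruct (Rle_or_lt (G0 - gamma * (G0 / beta)) P) as [h|h]; [exact h|].
    exfalso.
    set (X := G0 - gamma * (G0 / beta) - P).
    assert (G0 / beta >= 0).
    { pose proof (HE2p 0%nat). simpl in H1. pose proof (HG 0%nat). lra. }
    destruct (INR_unbounded (G0 / beta / X)) as [N HN].
    assert (HX : 0 < X) by (unfold X; lra).
    assert (h1 : sum_f_R0 e2 N = G0 - G (S N) - sum_f_R0 e1 N).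
    { rewrite <- telesc, sum_plus. lra. }
    assert (h2 : sum_f_R0 e1 N <= gamma * (G0 / beta)).
    { apply Rle_trans with (gamma * sum_f_R0 G N).
      - rewrite scal_sum. apply sum_Rle. intros. rewrite Rmult_comm. apply He1b.
      - apply Rmult_le_compat_l; [lra|]. apply sumG_bound. }
    assert (h3 : INR (S (S N)) * G (S N) <= G0 / beta).
    { eapply Rle_trans; [apply sum_const_le|apply sumG_bound].
      intros. apply G_decr. lia. }
    assert (h4 : G (S N) < X).
    { rewrite !S_INR in h3. pose proof (pos_INR N).
      assert (G0 / beta / X * X = G0 / beta) by (field; lra).
      pose proof (HG (S N)).
      destruct (Rle_or_lt X (G (S N))) as [h5|h5]; [|exact h5].
      exfalso. nra. }
    pose proof (HPp N). unfold X in h4. lra. }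
  assert (HHsum : forall N, sum_f_R0 H N <= (H0 + P) / (1 - q)).
  { assert (Hrec : forall N, sum_f_R0 H (S N) = H0 + q * sum_f_R0 H N + sum_f_R0 e2 N).
    { induction N.
      - simpl. rewrite HHS, HH0. ring.
      - rewrite (tech5 H (S N)), (tech5 e2 N), (HHS (S N)), (tech5 H N). rewrite (tech5 H N) in IHN. lra. }
    assert (P0 : 0 <= P) by (pose proof (HPp 0%nat); simpl in *; pose proof (He2 0%nat); lra).
    assert (HB : H0 + P <= (H0 + P) / (1 - q) * (1 - q)) by (right; field; lra).
    assert (HB2 : H0 <= (H0 + P) / (1 - q)).
    { apply Rmult_le_reg_r with (1 - q); [lra|].
      pose proof (HH 0%nat). rewrite HH0 in H1.
      assert (0 <= (H0 + P) / (1 - q)) by (apply Rmult_le_pos; [lra| left; apply Rinv_0_lt_compat; lra]).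
      nra. }
    induction N.
    - simpl. rewrite HH0. exact HB2.
    - rewrite Hrec. pose proof (HPp N). nra. }
  destruct (conv_bounded H _ HH HHsum) as [L [HL [HLb HLp]]].
  exists E2, P, L. repeat split; try assumption.
  - pose proof (HE2p 0%nat). simpl in H1. pose proof (HG 0%nat). lra.
  -
    assert (Hrec : forall N, sum_f_R0 H (S N) = H0 + q * sum_f_R0 H N + sum_f_R0 e2 N).
    { induction N.
      - simpl. rewrite HHS, HH0. ring.
      - rewrite (tech5 H (S N)), (tech5 e2 N), (HHS (S N)), (tech5 H N). rewrite (tech5 H N) in IHN. lra. }
    destruct (Rle_or_lt (H0 + P) ((1 - q) * L)) as [h|h]; [exact h|].
    exfalso. set (d := H0 + P - (1 - q) * L).
    assert (Hd : 0 < d) by (unfold d; lra).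
    destruct (HL (d/2)) as [N1 HN1]; [lra|].
    destruct (HP (d/2)) as [N2 HN2]; [lra|].
    set (N := Nat.max N1 N2).
    specialize (HN1 N ltac:(lia)). specialize (HN2 N ltac:(lia)).
    unfold Rdist in *. apply Rabs_def2 in HN1. apply Rabs_def2 in HN2.
    pose proof (HLp (S N)). rewrite Hrec in H1.
    destruct HN1, HN2. unfold d in *. nra.
Qed.
End Abs.
From Stdlib Require Import Reals Lra Lia.
Open Scope R_scope.

Lemma sum_zero n : sum_f_R0 (fun _ => 0) n = 0.
Proof. induction n; simpl; [|rewrite IHn]; ring. Qed.

Lemma sum_ext (f g : nat -> R) n : (forall i, (i <= n)%nat -> f i = g i) ->
  sum_f_R0 f n = sum_f_R0 g n.
Proof. apply sum_eq. Qed.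

Lemma sum_swap (f : nat -> nat -> R) n m :
  sum_f_R0 (fun j => sum_f_R0 (fun i => f i j) n) m =
  sum_f_R0 (fun i => sum_f_R0 (fun j => f i j) m) n.
Proof.
  induction m; simpl.
  - reflexivity.
  - rewrite IHm. rewrite <- sum_plus. reflexivity.
Qed.

Lemma sum_split2 (f : nat -> R) n : (2 <= n)%nat ->
  sum_f_R0 f n = f 0%nat + f 1%nat + f 2%nat +
    sum_f_R0 (fun j => if Nat.ltb 2 j then f j else 0) n.
Proof.
  intro Hn. induction Hn.
  - simpl. ring.
  - rewrite !tech5, IHHn. replace (Nat.ltb 2 (S m)) with true
      by (symmetry; apply Nat.ltb_lt; lia). ring.
Qed.

Lemma sum_split1 (f : nat -> R) n : (2 <= n)%nat ->
  sum_f_R0 (fun j => if Nat.ltb 1 j then f j else 0) n =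
  f 2%nat + sum_f_R0 (fun j => if Nat.ltb 2 j then f j else 0) n.
Proof.
  intro Hn. induction Hn.
  - simpl. ring.
  - rewrite !tech5, IHHn. replace (Nat.ltb 2 (S m)) with true
      by (symmetry; apply Nat.ltb_lt; lia).
    replace (Nat.ltb 1 (S m)) with true by (symmetry; apply Nat.ltb_lt; lia). ring.
Qed.

Lemma sum_trunc (f : nat -> R) i n : (i <= n)%nat ->
  (forall j, (i < j <= n)%nat -> f j = 0) -> sum_f_R0 f n = sum_f_R0 f i.
Proof.
  intros Hin Hz. induction Hin.
  - reflexivity.
  - rewrite tech5, IHHin by (intros; apply Hz; lia). rewrite (Hz (S m)) by lia. ring.
Qed.

Lemma sum_single (f : nat -> R) n : (forall j, (j < n)%nat -> f j = 0) ->
  sum_f_R0 f n = f n.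
Proof.
  intro Hz. destruct n. reflexivity.
  rewrite tech5. rewrite (sum_ext f (fun _ => 0)) by (intros; apply Hz; lia).
  rewrite sum_zero. ring.
Qed.

Lemma sum_if_distr (b : nat -> bool) (f : nat -> R) n :
  sum_f_R0 (fun j => if b j then f j else 0) n <= sum_f_R0 f n \/ True.
Proof. right; exact I. Qed.

Definition rr (lam : R) (m : nat) : R := Rpower lam (/ INR (m - 1)).

Lemma rr_pos lam m : 0 < rr lam m.
Proof. unfold rr, Rpower. apply exp_pos. Qed.

Lemma rr_pow lam m : 0 < lam -> (2 <= m)%nat -> rr lam m ^ (m - 1) = lam.
Proof.
  intros Hl Hm. unfold rr. rewrite <- Rpower_pow by (unfold Rpower; apply exp_pos).
  rewrite Rpower_mult. rewrite Rinv_l. apply Rpower_1; auto.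
  apply not_0_INR. lia.
Qed.

Lemma trans_form lam m k : (2 <= m)%nat -> (1 <= k <= m)%nat ->
  trans lam m k = C m k * (1 - rr lam m) ^ k * rr lam m ^ (m - k) / (1 - rr lam m ^ m).
Proof.
  intros Hm Hk. destruct m as [|[|m']]; try lia.
  unfold trans. replace (andb (Nat.leb 1 k) (Nat.leb k (S (S m')))) with true.
  - unfold bidprob, rr. replace (1 - (1 - Rpower lam (/ INR (S (S m') - 1))))
      with (Rpower lam (/ INR (S (S m') - 1))) by ring. reflexivity.
  - symmetry. apply andb_true_intro. split; apply Nat.leb_le; lia.
Qed.

Lemma trans_up lam m k : (m < k)%nat -> trans lam m k = 0.
Proof.
  intro H. destruct m as [|[|m']]; unfold trans.
  - reflexivity.
  - replace (Nat.eqb k 1) with false by (symmetry; apply Nat.eqb_neq; lia). reflexivity.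
  - replace (Nat.leb k (S (S m'))) with false by (symmetry; apply Nat.leb_gt; lia).
    rewrite Bool.andb_false_r. reflexivity.
Qed.

Lemma trans_0 lam m : trans lam m 0 = 0.
Proof. destruct m as [|[|m']]; reflexivity. Qed.

Lemma C_pos n k : 0 <= C n k.
Proof.
  unfold C. apply Rmult_le_pos. apply pos_INR. left. apply Rinv_0_lt_compat.
  apply Rmult_lt_0_compat; apply lt_0_INR; apply Factorial.lt_O_fact.
Qed.

Lemma C_ge1 n k : (k <= n)%nat -> 1 <= C n k.
Proof.
  revert k. induction n; intros k Hk.
  - replace k with 0%nat by lia. unfold C. simpl. lra.
  - destruct k.
    + unfold C. rewrite Nat.sub_0_r. simpl (Factorial.fact 0). change (INR 1) with 1.
      rewrite Rmult_1_l. unfold Rdiv. rewrite Rinv_r. lra. apply not_0_INR. pose proof (Factorial.lt_O_fact (S n)). lia.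
    + destruct (Nat.eq_dec k n) as [->|Hne].
      * unfold C. rewrite Nat.sub_diag. simpl (Factorial.fact 0). change (INR 1) with 1.
        rewrite Rmult_1_r. unfold Rdiv. rewrite Rinv_r. lra. apply not_0_INR. pose proof (Factorial.lt_O_fact (S n)). lia.
      * rewrite <- pascal by lia. pose proof (IHn k ltac:(lia)). pose proof (C_pos n (S k)). lra.
Qed.

Lemma C_0 n : C n 0 = 1.
Proof.
  unfold C. rewrite Nat.sub_0_r. simpl (Factorial.fact 0). change (INR 1) with 1.
  rewrite Rmult_1_l. unfold Rdiv. rewrite Rinv_r. lra. apply not_0_INR.
  pose proof (Factorial.lt_O_fact n). lia.
Qed.

Lemma C_1 n : (1 <= n)%nat -> C n 1 = INR n.
Proof.
  intro Hn. unfold C. destruct n. lia. replace (S n - 1)%nat with n by lia.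
  rewrite fact_simpl. rewrite mult_INR. simpl (Factorial.fact 1).
  assert (INR (Factorial.fact n) <> 0) by (apply not_0_INR; pose proof (Factorial.lt_O_fact n); lia).
  set (a := INR (S n)) in *. set (b := INR (Factorial.fact n)) in *. change (INR 1) with 1. field. auto.
Qed.

Lemma pow_lt1_aux x k : 0 <= x -> x < 1 -> (1 <= k)%nat -> x ^ k < 1.
Proof.
  intros h0 h1 hk. destruct k. lia. rewrite <- tech_pow_Rmult.
  assert (x ^ k <= 1) by (replace 1 with (1 ^ k) by apply pow1; apply pow_incr; lra).
  nra.
Qed.

Section Kernel.
Variables (lam : R).
Hypotheses (Hl0 : 0 < lam) (Hl1 : lam < 1).

Lemma rr_lt1 m : (2 <= m)%nat -> rr lam m < 1.
Proof.
  intro Hm. pose proof (rr_pow lam m Hl0 Hm). pose proof (rr_pos lam m).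
  destruct (Rlt_or_le (rr lam m) 1) as [h|h]; [exact h|].
  exfalso. assert (1 ^ (m-1) <= rr lam m ^ (m - 1)) by (apply pow_incr; lra).
  rewrite pow1 in H1. lra.
Qed.

Lemma rr_pow_lt1 m : (2 <= m)%nat -> 0 < 1 - rr lam m ^ m.
Proof.
  intro Hm. pose proof (rr_lt1 m Hm). pose proof (rr_pos lam m).
  assert (rr lam m ^ m < 1).
  { apply pow_lt1_aux; [lra|lra|lia]. }
  lra.
Qed.

Lemma trans_nonneg m k : 0 <= trans lam m k.
Proof.
  destruct (Nat.lt_ge_cases m k) as [h|h]. rewrite trans_up; auto; lra.
  destruct k. rewrite trans_0; lra.
  destruct m as [|[|m']]. simpl; lra. unfold trans. destruct (Nat.eqb (S k) 1); lra.
  rewrite trans_form by lia.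
  pose proof (rr_lt1 (S (S m')) ltac:(lia)). pose proof (rr_pos lam (S (S m'))).
  pose proof (rr_pow_lt1 (S (S m')) ltac:(lia)).
  apply Rmult_le_pos. apply Rmult_le_pos. apply Rmult_le_pos. apply C_pos.
  apply pow_le; lra. apply pow_le; lra. left; apply Rinv_0_lt_compat; lra.
Qed.

Lemma trans_row m n : (2 <= m <= n)%nat -> sum_f_R0 (trans lam m) n = 1.
Proof.
  intro Hm. rewrite (sum_trunc _ m n) by (try lia; intros; apply trans_up; lia).
  set (r := rr lam m).
  pose proof (rr_pow_lt1 m ltac:(lia)). fold r in H.
  rewrite (sum_ext _ (fun j => (C m j * (1 - r) ^ j * r ^ (m - j) -
                  (if Nat.eqb j 0 then r ^ m else 0)) / (1 - r ^ m))).
  - unfold Rdiv. rewrite <- scal_sum, minus_sum.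
    rewrite <- binomial. replace (1 - r + r) with 1 by ring. rewrite pow1.
    rewrite (sum_trunc (fun i => if Nat.eqb i 0 then r ^ m else 0) 0 m).
    + simpl. field. lra.
    + lia.
    + intros j Hj. destruct j. lia. reflexivity.
  - intros i Hi. destruct i.
    + rewrite trans_0. simpl. rewrite Nat.sub_0_r. rewrite C_0. field. lra.
    + rewrite trans_form by lia. simpl (Nat.eqb (S i) 0). fold r. change (if false then r ^ m else 0) with 0. field. lra.
Qed.

End Kernel.

Lemma sum_scal_l (c : R) (f : nat -> R) n :
  sum_f_R0 (fun j => c * f j) n = c * sum_f_R0 f n.
Proof. rewrite scal_sum. apply sum_ext. intros. ring. Qed.

Section Chain.
Variables (lam : R) (n : nat).
Hypotheses (Hl0 : 0 < lam) (Hl1 : lam < 1) (Hn : (2 <= n)%nat).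

Lemma dist_nonneg t j : 0 <= Defs.dist lam n t j.
Proof.
  revert j. induction t; intro j; simpl.
  - destruct (Nat.eqb j n); lra.
  - apply cond_pos_sum. intro i. apply Rmult_le_pos. apply IHt. apply trans_nonneg; auto.
Qed.

Definition e1s (t : nat) : R :=
  sum_f_R0 (fun j => if Nat.ltb 2 j then Defs.dist lam n t j * trans lam j 1 else 0) n.

Lemma rowsum i : (i <= n)%nat ->
  sum_f_R0 (fun j => if Nat.ltb 2 j then trans lam i j else 0) n =
  if Nat.ltb 2 i then 1 - trans lam i 1 - trans lam i 2 else 0.
Proof.
  intro Hi. destruct (Nat.ltb 2 i) eqn:E.
  - apply Nat.ltb_lt in E.
    pose proof (sum_split2 (trans lam i) n Hn). rewrite trans_row in H by (auto; lia).
    rewrite trans_0 in H. lra.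
  - apply Nat.ltb_ge in E. rewrite (sum_ext _ (fun _ => 0)). apply sum_zero.
    intros j Hj. destruct (Nat.ltb 2 j) eqn:E2; [|reflexivity].
    apply Nat.ltb_lt in E2. apply trans_up. lia.
Qed.

Lemma GS t : surv lam n 2 (S t) = surv lam n 2 t - enter2 lam n t - e1s t.
Proof.
  unfold surv, enter2, e1s. simpl Defs.dist.
  rewrite (sum_ext _ (fun j => sum_f_R0 (fun i => Defs.dist lam n t i *
            (if Nat.ltb 2 j then trans lam i j else 0)) n)).
  2:{ intros j Hj. destruct (Nat.ltb 2 j). reflexivity.
      rewrite (sum_ext _ (fun _ => 0)). symmetry; apply sum_zero. intros; ring. }
  rewrite sum_swap.
  rewrite (sum_ext _ (fun i => Defs.dist lam n t i *
      (if Nat.ltb 2 i then 1 - trans lam i 1 - trans lam i 2 else 0))).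
  2:{ intros i Hi. rewrite sum_scal_l. rewrite rowsum by auto. reflexivity. }
  rewrite <- !minus_sum. apply sum_ext. intros i Hi. destruct (Nat.ltb 2 i); ring.
Qed.

Lemma HS t : Defs.dist lam n (S t) 2 = trans lam 2 2 * Defs.dist lam n t 2 + enter2 lam n t.
Proof.
  simpl Defs.dist. rewrite sum_split2 by auto. unfold enter2.
  rewrite (trans_up lam 0 2), (trans_up lam 1 2) by lia. ring.
Qed.

Lemma surv1_split t : surv lam n 1 t = surv lam n 2 t + Defs.dist lam n t 2.
Proof. unfold surv. rewrite sum_split1 by auto. ring. Qed.

Lemma e2_lower beta : (forall j, (2 < j <= n)%nat -> beta <= trans lam j 2) ->
  forall t, beta * surv lam n 2 t <= enter2 lam n t.
Proof.
  intros Hb t. unfold surv, enter2. rewrite <- sum_scal_l. apply sum_Rle.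
  intros j Hj. destruct (Nat.ltb 2 j) eqn:E; [|lra]. apply Nat.ltb_lt in E.
  pose proof (Hb j ltac:(lia)). pose proof (dist_nonneg t j). nra.
Qed.

Lemma e1_upper gamma : (forall j, (2 < j <= n)%nat -> trans lam j 1 <= gamma) ->
  forall t, e1s t <= gamma * surv lam n 2 t.
Proof.
  intros Hb t. unfold surv, e1s. rewrite <- sum_scal_l. apply sum_Rle.
  intros j Hj. destruct (Nat.ltb 2 j) eqn:E; [|lra]. apply Nat.ltb_lt in E.
  pose proof (Hb j ltac:(lia)). pose proof (dist_nonneg t j). nra.
Qed.

Lemma e1_nonneg t : 0 <= e1s t.
Proof.
  unfold e1s. apply cond_pos_sum. intro j. destruct (Nat.ltb 2 j); [|lra].
  apply Rmult_le_pos. apply dist_nonneg. apply trans_nonneg; auto.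
Qed.

Lemma surv_nonneg m t : 0 <= surv lam n m t.
Proof.
  unfold surv. apply cond_pos_sum. intro j. destruct (Nat.ltb m j); [apply dist_nonneg|lra].
Qed.

Lemma G0_val : surv lam n 2 0 = if Nat.ltb 2 n then 1 else 0.
Proof.
  unfold surv. simpl Defs.dist. rewrite sum_single.
  - rewrite Nat.eqb_refl. reflexivity.
  - intros j Hj. replace (Nat.eqb j n) with false by (symmetry; apply Nat.eqb_neq; lia).
    destruct (Nat.ltb 2 j); reflexivity.
Qed.

Lemma H0_val : Defs.dist lam n 0 2 = if Nat.eqb 2 n then 1 else 0.
Proof. reflexivity. Qed.

End Chain.

Lemma pow_le1_mono x a b : 0 <= x -> x <= 1 -> (a <= b)%nat -> x ^ b <= x ^ a.
Proof.
  intros h0 h1 hab. replace b with (a + (b - a))%nat by lia. rewrite pow_add.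
  assert (x ^ (b - a) <= 1) by (replace 1 with (1 ^ (b - a)) by apply pow1; apply pow_incr; lra).
  pose proof (pow_le x a h0). nra.
Qed.

Lemma rr_small lam n dl i : 0 < lam -> 0 < dl -> dl <= 1 -> lam < dl ^ (n - 1) ->
  (2 <= i <= n)%nat -> rr lam i < dl.
Proof.
  intros Hl Hd Hd1 Hlt Hi. pose proof (rr_pow lam i Hl ltac:(lia)).
  pose proof (rr_pos lam i).
  destruct (Rlt_or_le (rr lam i) dl) as [h|h]; [exact h|]. exfalso.
  assert (dl ^ (i - 1) <= rr lam i ^ (i - 1)) by (apply pow_incr; lra).
  assert (dl ^ (n - 1) <= dl ^ (i - 1)) by (apply pow_le1_mono; lra || lia).
  lra.
Qed.

Lemma T2_lower lam j dl : 0 < lam -> (3 <= j)%nat -> rr lam j < dl -> dl <= 1/2 ->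
  lam / (4 * dl) <= trans lam j 2.
Proof.
  intros Hl Hj Hr Hd.
  assert (Hl1 : lam < 1).
  { pose proof (rr_pow lam j Hl ltac:(lia)). pose proof (rr_pos lam j).
    rewrite <- H. apply pow_lt1_aux; lra || lia. }
  rewrite trans_form by lia. set (r := rr lam j) in *.
  pose proof (rr_pos lam j). fold r in H.
  assert (HD : 0 < 1 - r ^ j) by (apply (rr_pow_lt1 lam Hl Hl1 j); lia).
  assert (HD1 : 1 - r ^ j <= 1) by (pose proof (pow_le r j); lra).
  set (x := r ^ (j - 2)).
  assert (Hx : x * r = lam).
  { unfold x. rewrite <- (rr_pow lam j Hl) by lia. fold r.
    replace (j - 1)%nat with ((j - 2) + 1)%nat by lia. rewrite pow_add. ring. }
  assert (Hx0 : 0 <= x) by (unfold x; apply pow_le; lra).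
  assert (HC : 1 <= C j 2) by (apply C_ge1; lia).
  assert (Hp : 1/4 <= (1 - r) ^ 2) by (simpl; nra).
  set (N := C j 2 * (1 - r) ^ 2 * x).
  assert (HN : x / 4 <= N).
  { unfold N. set (y := (1 - r) ^ 2) in *. set (c := C j 2) in *.
    assert (1/4 <= c * y) by nra. nra. }
  assert (HNd : N <= N / (1 - r ^ j)).
  { apply Rmult_le_reg_r with (1 - r ^ j); [lra|].
    unfold Rdiv. rewrite Rmult_assoc, Rinv_l by lra. nra. }
  assert (lam / (4 * dl) <= x / 4).
  { apply Rmult_le_reg_r with (4 * dl); [lra|].
    unfold Rdiv. rewrite Rmult_assoc, Rinv_l by lra.
    assert (x * r <= x * dl) by (apply Rmult_le_compat_l; lra).
    replace (x * / 4 * (4 * dl)) with (x * dl) by field. lra. }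
  lra.
Qed.

Lemma T1_upper lam j n : 0 < lam -> (3 <= j <= n)%nat -> rr lam j <= 1/2 ->
  trans lam j 1 <= 2 * INR n * lam.
Proof.
  intros Hl Hj Hr.
  assert (Hl1 : lam < 1).
  { pose proof (rr_pow lam j Hl ltac:(lia)). pose proof (rr_pos lam j).
    rewrite <- H. apply pow_lt1_aux; lra || lia. }
  rewrite trans_form by lia. rewrite C_1 by lia. rewrite pow_1. rewrite (rr_pow lam j Hl) by lia.
  set (r := rr lam j) in *.
  pose proof (rr_pos lam j). fold r in H.
  assert (Hrj : r ^ j <= r).
  { replace r with (r ^ 1) at 2 by apply pow_1. apply pow_le1_mono; lra || lia. }
  assert (HD : 1/2 <= 1 - r ^ j) by lra.
  assert (HjR : INR j <= INR n) by (apply le_INR; lia).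
  assert (0 <= INR j) by apply pos_INR.
  apply Rmult_le_reg_r with (1 - r ^ j); [lra|].
  unfold Rdiv. rewrite Rmult_assoc, Rinv_l by lra. rewrite Rmult_1_r.
  assert (INR j * (1 - r) <= INR n) by nra.
  assert (INR j * (1 - r) * lam <= INR n * lam) by (apply Rmult_le_compat_r; lra).
  assert (INR n * lam * 1 <= INR n * lam * (2 * (1 - r ^ j))).
  { apply Rmult_le_compat_l; [|lra]. apply Rmult_le_pos; lra. }
  lra.
Qed.

Lemma q_val lam : 0 < lam -> lam < 1 ->
  trans lam 2 2 = (1 - lam) / (1 + lam).
Proof.
  intros Hl Hl1. rewrite trans_form by lia.
  assert (rr lam 2 = lam) by (unfold rr; simpl; rewrite Rinv_1; apply Rpower_1; auto).
  rewrite H. replace (C 2 2) with 1.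
  - simpl. field. split; nra.
  - unfold C. simpl. field.
Qed.

Lemma concrete (n : nat) (lam dl : R) : (2 <= n)%nat -> 0 < lam -> 0 < dl ->
  dl <= 1 / (16 * INR n) -> lam < dl ^ (n - 1) ->
  exists E2 P L,
    infinite_sum (surv lam n 2) E2 /\ infinite_sum (enter2 lam n) P /\
    infinite_sum (surv lam n 1) (E2 + L) /\
    0 <= E2 /\ E2 <= 4 * dl / lam /\ 1 / (4 * lam) <= L /\
    ((2 < n)%nat -> 1 - 8 * INR n * dl <= P <= 1).
Proof.
  intros Hn Hl Hd Hdn Hlt.
  assert (HnR : 2 <= INR n) by (replace 2 with (INR 2) by (simpl; ring); apply le_INR; auto).
  assert (Hd2 : dl <= 1 / 32).
  { apply Rle_trans with (1 / (16 * INR n)); auto.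
    unfold Rdiv. rewrite !Rmult_1_l. apply Rinv_le_contravar; lra. }
  assert (Hdn' : 16 * INR n * dl <= 1).
  { apply Rmult_le_reg_r with (/ (16 * INR n)).
    apply Rinv_0_lt_compat; lra.
    replace (16 * INR n * dl * / (16 * INR n)) with dl by (field; lra). lra. }
  assert (Hl1 : lam < 1).
  { apply Rlt_le_trans with (dl ^ (n - 1)); auto.
    replace 1 with (1 ^ (n - 1)) by apply pow1. apply pow_incr; lra. }
  assert (Hr : forall i, (2 <= i <= n)%nat -> rr lam i < dl).
  { intros. apply rr_small with n; auto; lra. }
  set (beta := lam / (4 * dl)).
  set (gamma := 2 * INR n * lam).
  set (q := trans lam 2 2).
  assert (Hq : q = (1 - lam) / (1 + lam)) by (apply q_val; auto).
  assert (Hbeta : 0 < beta) by (unfold beta; apply Rdiv_lt_0_compat; lra).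
  assert (Hgamma : 0 <= gamma) by (unfold gamma; nra).
  assert (Hq0 : 0 <= q) by (rewrite Hq; apply Rmult_le_pos; [lra|left; apply Rinv_0_lt_compat; lra]).
  assert (Hq1 : 1 - q = 2 * lam / (1 + lam)) by (rewrite Hq; field; lra).
  assert (Hq1' : q < 1).
  { assert (0 < 2 * lam / (1 + lam)) by (apply Rdiv_lt_0_compat; lra). lra. }
  assert (Hq2 : 1 - q <= 2 * lam).
  { rewrite Hq1. apply Rmult_le_reg_r with (1 + lam); [lra|].
    replace (2 * lam / (1 + lam) * (1 + lam)) with (2 * lam) by (field; lra). nra. }
  destruct (abstract_main (surv lam n 2) (fun t => Defs.dist lam n t 2) (e1s lam n) (enter2 lam n)
     beta gamma q (if Nat.ltb 2 n then 1 else 0) (if Nat.eqb 2 n then 1 else 0))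
     as [E2 [P [L [HE2 [HE20 [HE2b [HP [HPb [HPl [HL HLb]]]]]]]]]]; auto.
  - intro t. apply surv_nonneg; auto.
  - intro t. apply dist_nonneg; auto.
  - intro t. apply e1_nonneg; auto.
  - apply G0_val; auto.
  - intro t. apply GS; auto.
  - intro t. apply HS; auto.
  - apply e2_lower; auto. intros j Hj. apply T2_lower; auto. lia. apply Hr; lia. lra.
  - apply e1_upper; auto. intros j Hj. apply T1_upper; auto. left. apply Rlt_le_trans with dl.
    apply Hr; lia. lra.
  - set (G0 := if Nat.ltb 2 n then 1 else 0) in *.
    set (H0 := if Nat.eqb 2 n then 1 else 0) in *.
    assert (HGH : G0 + H0 = 1 /\ 0 <= G0 <= 1 /\ 0 <= H0).
    { unfold G0, H0. destruct (Nat.ltb 2 n) eqn:Ea; destruct (Nat.eqb 2 n) eqn:Eb.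
      - apply Nat.ltb_lt in Ea. apply Nat.eqb_eq in Eb. lia.
      - lra. - lra.
      - apply Nat.ltb_ge in Ea. apply Nat.eqb_neq in Eb. lia. }
    assert (Hgb : gamma * (G0 / beta) = 8 * INR n * dl * G0).
    { unfold gamma, beta. field. lra. }
    rewrite Hgb in HPl.
    exists E2, P, L. split; [exact HE2|]. split; [exact HP|]. split.
    + intros eps Heps. destruct (CV_plus _ _ _ _ HE2 HL eps Heps) as [N HN].
      exists N. intros m Hm. specialize (HN m Hm).
      rewrite (sum_ext _ (fun t => surv lam n 2 t + Defs.dist lam n t 2)).
      rewrite sum_plus. exact HN.
      intros. apply surv1_split; auto.
    + split; [exact HE20|]. split.
      * apply Rle_trans with (G0 / beta); auto. unfold beta.
        replace (G0 / (lam / (4 * dl))) with (G0 * (4 * dl / lam)) by (field; lra).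
        assert (0 <= 4 * dl / lam) by (apply Rmult_le_pos; [lra|left; apply Rinv_0_lt_compat; lra]).
        nra.
      * split.
        -- assert (H0 + P >= 1/2) by nra.
           assert (0 < 1 - q) by lra.
           assert (0 <= L) by nra.
           assert (1/2 <= 2 * lam * L) by nra.
           apply Rmult_le_reg_r with (4 * lam); [lra|].
           replace (1 / (4 * lam) * (4 * lam)) with 1 by (field; lra). nra.
        -- intro h2. assert (G0 = 1) by (unfold G0; replace (Nat.ltb 2 n) with true
              by (symmetry; apply Nat.ltb_lt; lia); reflexivity).
           rewrite H in *. lra.
Qed.

Lemma util_pos rho x : rho <= 0 -> 0 < x -> 0 < util rho x.
Proof.
  intros Hr Hx. unfold util. destruct (Req_EM_T rho 0); [exact Hx|].
  assert (Hr' : rho < 0) by lra.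
  assert (1 < exp (- rho * x)).
  { rewrite <- exp_0. apply exp_increasing. nra. }
  replace ((1 - exp (- rho * x)) / rho) with ((exp (- rho * x) - 1) / (- rho)) by (field; lra).
  apply Rdiv_lt_0_compat; lra.
Qed.

Lemma lambda_pos rho c v s : rho <= 0 -> 0 < c -> c < v - s -> 0 < lambda rho c v s.
Proof.
  intros. unfold lambda. apply Rdiv_lt_0_compat; apply util_pos; lra.
Qed.

Lemma delta_pos dl m : 0 < dl -> 0 < dl ^ m.
Proof. intro. apply pow_lt. auto. Qed.

Theorem theorem4 (n : nat) (rho : R) (Hn : (2 <= n)%nat) (Hrho : rho <= 0) :
  (forall M : R, exists d : R, 0 < d /\
     forall c v s : R, 0 < c -> 0 <= s -> c < v - s ->
       lambda rho c v s < d ->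
       exists N : nat, M < sum_f_R0 (surv (lambda rho c v s) n 1) N)
  /\
  ((2 < n)%nat -> forall eps : R, 0 < eps -> exists d : R, 0 < d /\
     forall c v s : R, 0 < c -> 0 <= s -> c < v - s ->
       lambda rho c v s < d ->
       exists P : R, infinite_sum (enter2 (lambda rho c v s) n) P /\
                     Rabs (P - 1) < eps)
  /\
  ((2 < n)%nat -> forall eps : R, 0 < eps -> exists d : R, 0 < d /\
     forall c v s : R, 0 < c -> 0 <= s -> c < v - s ->
       lambda rho c v s < d ->
       exists E1 E2 : R,
         infinite_sum (surv (lambda rho c v s) n 1) E1 /\
         infinite_sum (surv (lambda rho c v s) n 2) E2 /\
         Rabs (E2 / E1) < eps).
Proof.
  assert (HnR : 2 <= INR n) by (replace 2 with (INR 2) by (simpl; ring); apply le_INR; auto).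
  assert (H16 : 0 < 16 * INR n) by lra.
  set (d0 := 1 / (16 * INR n)).
  assert (Hd0 : 0 < d0) by (unfold d0; apply Rdiv_lt_0_compat; lra).
  split; [|split].
  - intro M. set (dd := Rmin (d0 ^ (n - 1)) (1 / (4 * (Rabs M + 1)))).
    assert (HM : 0 < Rabs M + 1) by (pose proof (Rabs_pos M); lra).
    exists dd. split.
    { unfold dd. apply Rmin_pos. apply delta_pos; auto. apply Rdiv_lt_0_compat; lra. }
    intros c v s Hc Hs Hcv Hlt.
    set (lam := lambda rho c v s) in *.
    assert (Hl : 0 < lam) by (apply lambda_pos; auto).
    destruct (concrete n lam d0) as [E2 [P [L [HE2 [HP [HE1 [HE20 [HE2b [HL _]]]]]]]]]; auto.
    + unfold d0; lra.
    + apply Rlt_le_trans with dd; auto. apply Rmin_l.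
    + assert (lam < 1 / (4 * (Rabs M + 1))) by (apply Rlt_le_trans with dd; auto; apply Rmin_r).
      assert (Rabs M + 1 < L).
      { apply Rlt_le_trans with (1 / (4 * lam)); auto.
        apply Rmult_lt_reg_r with (4 * lam); [lra|].
        replace (1 / (4 * lam) * (4 * lam)) with 1 by (field; lra).
        apply Rmult_lt_reg_r with (/ (4 * (Rabs M + 1))). apply Rinv_0_lt_compat; lra.
        replace ((Rabs M + 1) * (4 * lam) * / (4 * (Rabs M + 1))) with lam by (field; lra).
        lra. }
      destruct (HE1 1 ltac:(lra)) as [N HN]. exists N. specialize (HN N (le_n N)).
      unfold Rdist in HN. apply Rabs_def2 in HN. pose proof (Rle_abs M). lra.
  - intros h2 eps Heps.
    set (dl := Rmin d0 (eps / (16 * INR n))).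
    assert (Hdl : 0 < dl) by (unfold dl; apply Rmin_pos; auto; apply Rdiv_lt_0_compat; lra).
    exists (dl ^ (n - 1)). split; [apply delta_pos; auto|].
    intros c v s Hc Hs Hcv Hlt.
    set (lam := lambda rho c v s) in *.
    assert (Hl : 0 < lam) by (apply lambda_pos; auto).
    destruct (concrete n lam dl) as [E2 [P [L [HE2 [HP [HE1 [HE20 [HE2b [HL HPP]]]]]]]]]; auto.
    + apply Rmin_l.
    + exists P. split; auto. specialize (HPP h2).
      assert (dl <= eps / (16 * INR n)) by apply Rmin_r.
      assert (16 * INR n * dl <= eps).
      { apply Rmult_le_reg_r with (/ (16 * INR n)). apply Rinv_0_lt_compat; lra.
        replace (16 * INR n * dl * / (16 * INR n)) with dl by (field; lra). exact H. }
      rewrite Rabs_left1 by lra. assert (0 < INR n * dl) by nra. lra.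
  - intros h2 eps Heps.
    set (dl := Rmin d0 (eps / 32)).
    assert (Hdl : 0 < dl) by (unfold dl; apply Rmin_pos; auto; lra).
    exists (dl ^ (n - 1)). split; [apply delta_pos; auto|].
    intros c v s Hc Hs Hcv Hlt.
    set (lam := lambda rho c v s) in *.
    assert (Hl : 0 < lam) by (apply lambda_pos; auto).
    destruct (concrete n lam dl) as [E2 [P [L [HE2 [HP [HE1 [HE20 [HE2b [HL HPP]]]]]]]]]; auto.
    + apply Rmin_l.
    + exists (E2 + L), E2. split; auto. split; auto.
      assert (dl <= eps / 32) by apply Rmin_r.
      assert (HL0 : 0 < L).
      { apply Rlt_le_trans with (1 / (4 * lam)); auto. apply Rdiv_lt_0_compat; lra. }
      assert (A1 : E2 * lam <= 4 * dl).
      { apply Rmult_le_compat_r with (r := lam) in HE2b; [|lra].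
        replace (4 * dl / lam * lam) with (4 * dl) in HE2b by (field; lra). exact HE2b. }
      assert (A2 : 1 <= 4 * lam * L).
      { apply Rmult_le_compat_r with (r := 4 * lam) in HL; [|lra].
        replace (1 / (4 * lam) * (4 * lam)) with 1 in HL by (field; lra). lra. }
      assert (A3 : E2 <= 16 * dl * L).
      { apply Rmult_le_reg_r with lam; auto. nra. }
      rewrite Rabs_right.
      * apply Rmult_lt_reg_r with (E2 + L); [lra|].
        replace (E2 / (E2 + L) * (E2 + L)) with E2 by (field; lra). nra.
      * apply Rle_ge. apply Rmult_le_pos; auto. left; apply Rinv_0_lt_compat; lra.
Qed.
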